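(* Let $(M,g)$ be a semi-Riemannian manifold with Levi-Civita connection $\overset{\circ}{\nabla}$, and let $\nabla$ be an affine connection on $M$ of the form $\nabla_X Y=\overset{\circ}{\nabla}_X Y+U(-,X,Y)$ for all vector fields $X,Y$, where $U$ is a $(1,2)$-tensor field. Fix a different affine connection $\overset{A}{\nabla}$ on $M$ with torsion tensor $\overset{A}{T}$ and non-metricity tensor $\overset{A}{Q}$ satisfying $$\overset{A}{Q}(X,Y,Z)+\overset{A}{Q}(Z,X,Y)+\overset{A}{Q}(Y,Z,X)=0\quad\text{for all vector fields }X,Y,Z,$$ and let $\pi,W$ be two one-forms on $M$. If $U$ is given, for all one-forms $\omega$ and vector fields $X,Y$, by any one of the following: (i) $U(\omega,X,Y)=\frac12\left(\overset{A}{T}(X^\flat,Y,\omega^\sharp)+\overset{A}{T}(Y^\flat,X,\omega^\sharp)\right)$; (ii) $U(\omega,X,Y)=\frac12\left(X^\flat\big(\pi(\omega^\sharp)Y-\pi(Y)\omega^\sharp\big)+Y^\flat\big(\pi(\omega^\sharp)X-\pi(X)\omega^\sharp\big)\right)$; (iii) $U(\omega,X,Y)=-\overset{A}{Q}(\omega^\sharp,X,Y)$; (iv) $U(\omega,X,Y)=\frac12\left(\overset{A}{T}(X^\flat,Y,\omega^\sharp)+\overset{A}{T}(Y^\flat,X,\omega^\sharp)\right)-\overset{A}{Q}(\omega^\sharp,X,Y)$; (v) $U(\omega,X,Y)=\pi(\omega^\sharp)W(X)W(Y)-\frac12\left(W(\omega^\sharp)W(X)\pi(Y)+W(\omega^\sharp)W(Y)\pi(X)\right)$,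 then $\nabla$ is a Schrödinger connection.
   Context: Musical isomorphisms: $X^\flat=g(X,-)$, $\omega^\sharp=g^{-1}(\omega,-)$. For a $(1,2)$-tensor field $U$, $U(-,X,Y)$ denotes the vector field with $\omega(U(-,X,Y))=U(\omega,X,Y)$. An affine connection $\nabla$ with $\nabla_XY=\overset{\circ}{\nabla}_XY+U(-,X,Y)$ is called a Schrödinger connection if for all vector fields $X,Y$ and one-forms $\omega$: (a) $U(\omega,X,Y)=U(\omega,Y,X)$, and (b) $U(\omega,X,Y)+U(\omega,Y,X)+U(X^\flat,\omega^\sharp,Y)+U(X^\flat,Y,\omega^\sharp)+U(Y^\flat,\omega^\sharp,X)+U(Y^\flat,X,\omega^\sharp)=0$. For an affine connection $\overset{A}{\nabla}$, its torsion is $\overset{A}{T}(\omega,X,Y)=\omega(\overset{A}{\nabla}_XY-\overset{A}{\nabla}_YX-[X,Y])$ and its non-metricity is $\overset{A}{Q}(X,Y,Z)=-(\overset{A}{\nabla}_Xg)(Y,Z)$. An expression such as $X^\flat(V)$ for a vector field $V$ means $g(X,V)$. *)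

(* Defs.v *)
(* Algebraic (tensorial) model of a semi-Riemannian manifold:
   F  = ring of smooth functions (commutative, with 2 invertible),
   V  = F-module of vector fields,
   act X f = X(f) (derivation), br = Lie bracket,
   one-forms = F-linear maps V -> F,
   g = symmetric F-bilinear nondegenerate metric, sharp = inverse of flat. *)
From mathcomp Require Import all_boot all_algebra.
Set Implicit Arguments. Unset Strict Implicit. Unset Printing Implicit Defensive.
Import GRing.Theory.
Local Open Scope ring_scope.

Section Defs.
Variables (F : comUnitRingType) (V : lmodType F).

Definition one_form (w : V -> F) : Prop :=
  forall (a : F) (x y : V), w (a *: x + y) = a * w x + w y.

Definition is_anchor (act : V -> F -> F) : Prop :=
  (forall a X Y f, act (a *: X + Y) f = a * act X f + act Y f) /\
  (forall X f h, act X (f + h) = act X f + act X h) /\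
  (forall X f h, act X (f * h) = act X f * h + f * act X h).

Definition is_lie_bracket (act : V -> F -> F) (br : V -> V -> V) : Prop :=
  (forall X Y, br X Y = - br Y X) /\
  (forall X Y Z, br X (Y + Z) = br X Y + br X Z) /\
  (forall X f Y, br X (f *: Y) = act X f *: Y + f *: br X Y) /\
  (forall X Y Z, br X (br Y Z) + br Y (br Z X) + br Z (br X Y) = 0) /\
  (forall X Y f, act (br X Y) f = act X (act Y f) - act Y (act X f)).

Definition is_metric (g : V -> V -> F) : Prop :=
  (forall X Y, g X Y = g Y X) /\
  (forall Y, one_form (fun X => g X Y)) /\
  (forall X, (forall Y, g X Y = 0) -> X = 0).

Definition is_sharp (g : V -> V -> F) (sharp : (V -> F) -> V) : Prop :=
  forall w, one_form w -> forall Y, g (sharp w) Y = w Y.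

Definition affine_connection (act : V -> F -> F) (nab : V -> V -> V) : Prop :=
  (forall a X Y Z, nab (a *: X + Y) Z = a *: nab X Z + nab Y Z) /\
  (forall X Y Z, nab X (Y + Z) = nab X Y + nab X Z) /\
  (forall X f Y, nab X (f *: Y) = act X f *: Y + f *: nab X Y).

Definition torsion (br : V -> V -> V) (nab : V -> V -> V) (w : V -> F) (X Y : V) : F :=
  w (nab X Y - nab Y X - br X Y).

Definition nonmetricity (act : V -> F -> F) (g : V -> V -> F) (nab : V -> V -> V)
  (X Y Z : V) : F :=
  - (act X (g Y Z) - g (nab X Y) Z - g Y (nab X Z)).

Definition levi_civita act br g (nab : V -> V -> V) : Prop :=
  affine_connection act nab /\
  (forall X Y, nab X Y - nab Y X - br X Y = 0) /\
  (forall X Y Z, nonmetricity act g nab X Y Z = 0).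

(* a (1,2)-tensor field, represented by the vector field U(-,X,Y) *)
Definition tensor12 (Uv : V -> V -> V) : Prop :=
  (forall a X Y Z, Uv (a *: X + Y) Z = a *: Uv X Z + Uv Y Z) /\
  (forall a X Y Z, Uv Z (a *: X + Y) = a *: Uv Z X + Uv Z Y).

Definition Uapp (Uv : V -> V -> V) (w : V -> F) (X Y : V) : F := w (Uv X Y).

(* conditions (a) and (b); X^flat = g X *)
Definition schroedinger_U (g : V -> V -> F) (sharp : (V -> F) -> V)
  (Uv : V -> V -> V) : Prop :=
  forall w X Y, one_form w ->
    Uapp Uv w X Y = Uapp Uv w Y X /\
    Uapp Uv w X Y + Uapp Uv w Y X
    + Uapp Uv (g X) (sharp w) Y + Uapp Uv (g X) Y (sharp w)
    + Uapp Uv (g Y) (sharp w) X + Uapp Uv (g Y) X (sharp w) = 0.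

Definition schroedinger_connection g sharp (LC nab : V -> V -> V) : Prop :=
  schroedinger_U g sharp (fun X Y => nab X Y - LC X Y).

End Defs.

(* Main.v *)
Require Import Defs.
From mathcomp Require Import all_boot all_algebra.
From mathcomp Require Import ring.
Import GRing.Theory.
Local Open Scope ring_scope.

Section Helpers.
Variables (F : comUnitRingType) (V : lmodType F) (g : V -> V -> F)
  (sharp : (V -> F) -> V).
Hypothesis hg : is_metric g.
Hypothesis hs : is_sharp g sharp.

Lemma gsym X Y : g X Y = g Y X.
Proof. by case: hg. Qed.

Lemma gD1 x y Z : g (x + y) Z = g x Z + g y Z.
Proof. case: hg => _ [h _]. by have := h Z 1 x y; rewrite scale1r mul1r. Qed.

Lemma g01 Z : g 0 Z = 0.
Proof. have h := gD1 0 0 Z; rewrite addr0 in h.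
by apply: (addrI (g 0 Z)); rewrite addr0 -h. Qed.

Lemma gZ1 a x Z : g (a *: x) Z = a * g x Z.
Proof. case: hg => _ [h _]. by have := h Z a x 0; rewrite !addr0 g01 addr0. Qed.

Lemma gN1 x Z : g (- x) Z = - g x Z.
Proof. by rewrite -scaleN1r gZ1 mulN1r. Qed.

Lemma gD2 Z x y : g Z (x + y) = g Z x + g Z y.
Proof. by rewrite gsym gD1 !(gsym Z). Qed.
Lemma gZ2 Z a x : g Z (a *: x) = a * g Z x.
Proof. by rewrite gsym gZ1 (gsym Z). Qed.
Lemma gN2 Z x : g Z (- x) = - g Z x.
Proof. by rewrite gsym gN1 (gsym Z). Qed.

Lemma ofg X : one_form (g X).
Proof. by move=> a x y; rewrite gD2 gZ2. Qed.

Lemma sharpg X : sharp (g X) = X.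
Proof.
case: hg => _ [_ h].
apply/eqP; rewrite -subr_eq0; apply/eqP; apply: h => Y.
by rewrite gD1 gN1 hs ?subrr //; apply: ofg.
Qed.

Lemma key (Uv : V -> V -> V) (u : V -> V -> V -> F) :
  (forall w X Y, one_form w -> Uapp Uv w X Y = u (sharp w) X Y) ->
  (forall Z X Y, u Z X Y = u Z Y X) ->
  (forall Z X Y, u Z X Y + u Z Y X + u X Z Y + u X Y Z + u Y Z X + u Y X Z = 0) ->
  schroedinger_U g sharp Uv.
Proof.
move=> hU hsym hsix w X Y hw.
have hX := ofg X; have hY := ofg Y.
rewrite !(hU w _ _ hw) !(hU (g X) _ _ hX) !(hU (g Y) _ _ hY) !sharpg.
by split; [apply: hsym | apply: hsix].
Qed.
End Helpers.

Theorem mainTheorem1 (F : comUnitRingType) (V : lmodType F)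
  (act : V -> F -> F) (br : V -> V -> V)
  (g : V -> V -> F) (sharp : (V -> F) -> V)
  (LC nab nabA Uv : V -> V -> V) (pi W : V -> F) :
  (2%:R : F) \is a GRing.unit ->
  is_anchor act -> is_lie_bracket act br ->
  is_metric g -> is_sharp g sharp ->
  levi_civita act br g LC ->
  affine_connection act nab -> tensor12 Uv ->
  (forall X Y, nab X Y = LC X Y + Uv X Y) ->
  affine_connection act nabA ->
  (forall X Y Z, nonmetricity act g nabA X Y Z + nonmetricity act g nabA Z X Y
                 + nonmetricity act g nabA Y Z X = 0) ->
  one_form pi -> one_form W ->
  ((forall w X Y, one_form w -> Uapp Uv w X Y =
       (2%:R)^-1 * (torsion br nabA (g X) Y (sharp w) + torsion br nabA (g Y) X (sharp w)))
   \/ (forall w X Y, one_form w -> Uapp Uv w X Y =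
       (2%:R)^-1 * (g X (pi (sharp w) *: Y - pi Y *: sharp w)
                    + g Y (pi (sharp w) *: X - pi X *: sharp w)))
   \/ (forall w X Y, one_form w -> Uapp Uv w X Y =
       - nonmetricity act g nabA (sharp w) X Y)
   \/ (forall w X Y, one_form w -> Uapp Uv w X Y =
       (2%:R)^-1 * (torsion br nabA (g X) Y (sharp w) + torsion br nabA (g Y) X (sharp w))
       - nonmetricity act g nabA (sharp w) X Y)
   \/ (forall w X Y, one_form w -> Uapp Uv w X Y =
       pi (sharp w) * W X * W Y
       - (2%:R)^-1 * (W (sharp w) * W X * pi Y + W (sharp w) * W Y * pi X))) ->
  schroedinger_connection g sharp LC nab.
Proof.
move=> h2 hact hbr hg hs hLC hnab hU hnabU hA hQ hpi hW hcases.
have e : forall X Y, nab X Y - LC X Y = Uv X Y.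
  by move=> X Y; rewrite hnabU addrC addKr.
suff S : schroedinger_U g sharp Uv.
  by move=> w X Y hw; rewrite /Uapp !e; exact: S w X Y hw.
pose tau A B C := torsion br nabA (g A) B C.
have anti : forall A B C, tau A C B = - tau A B C.
  move=> A B C; rewrite /tau /torsion -(@gN2 F V g hg); congr (g A _).
  case: hbr => hb _; by rewrite (hb C B) opprK !opprB addrC addrA.
pose ui Z X Y := (2%:R : F)^-1 * (tau X Y Z + tau Y X Z).
have ui_sym : forall Z X Y, ui Z X Y = ui Z Y X by move=> Z X Y; rewrite /ui addrC.
have ui_six : forall Z X Y, ui Z X Y + ui Z Y X + ui X Z Y + ui X Y Z + ui Y Z X + ui Y X Z = 0.
  move=> Z X Y; rewrite /ui (anti X Z Y) (anti Y Z X) (anti Z Y X); ring.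
pose Q := nonmetricity act g nabA.
have Qsym : forall Z X Y, Q Z X Y = Q Z Y X.
  move=> Z X Y; rewrite /Q /nonmetricity (@gsym F V g hg Y X) (@gsym F V g hg Y (nabA Z X)) (@gsym F V g hg (nabA Z Y) X).
  by congr (- _); rewrite -!addrA; congr (_ + _); rewrite addrC.
pose uq Z X Y := - Q Z X Y.
have uq_sym : forall Z X Y, uq Z X Y = uq Z Y X by move=> Z X Y; rewrite /uq Qsym.
have uq_six : forall Z X Y, uq Z X Y + uq Z Y X + uq X Z Y + uq X Y Z + uq Y Z X + uq Y X Z = 0.
  move=> Z X Y; rewrite /uq (Qsym Z Y X) (Qsym X Z Y) (Qsym Y X Z).
  have h := hQ X Y Z; rewrite -/Q in h.
  transitivity (- (2%:R) * (Q X Y Z + Q Z X Y + Q Y Z X)); first ring.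
  by rewrite h mulr0.
case: hcases => [hc|[hc|[hc|[hc|hc]]]].
- by apply: (@key F V g sharp hg hs Uv (ui)).
- pose u Z X Y := (2%:R : F)^-1 * (g X (pi Z *: Y - pi Y *: Z) + g Y (pi Z *: X - pi X *: Z)).
  apply: (@key F V g sharp hg hs Uv (u)) => //.
  + move=> Z X Y; rewrite /u !(@gD2 F V g hg) !(@gN2 F V g hg) !(@gZ2 F V g hg) ?(@gsym F V g hg Y X); ring.
  + move=> Z X Y; rewrite /u !(@gD2 F V g hg) !(@gN2 F V g hg) !(@gZ2 F V g hg) ?(@gsym F V g hg Y X) ?(@gsym F V g hg Z X) ?(@gsym F V g hg Z Y); ring.
- by apply: (@key F V g sharp hg hs Uv (uq)).
- apply: (@key F V g sharp hg hs Uv (fun Z X Y => ui Z X Y + uq Z X Y)) => //.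
  + by move=> Z X Y; rewrite ui_sym uq_sym.
  + move=> Z X Y; have h1 := ui_six Z X Y; have h3 := uq_six Z X Y.
    transitivity ((ui Z X Y + ui Z Y X + ui X Z Y + ui X Y Z + ui Y Z X + ui Y X Z) + (uq Z X Y + uq Z Y X + uq X Z Y + uq X Y Z + uq Y Z X + uq Y X Z)); first ring.
    by rewrite h1 h3 addr0.
- pose u Z X Y := pi Z * W X * W Y - (2%:R : F)^-1 * (W Z * W X * pi Y + W Z * W Y * pi X).
  apply: (@key F V g sharp hg hs Uv (u)) => //.
  + by move=> Z X Y; rewrite /u /=; ring.
  + move=> Z X Y; rewrite /u /=.
    transitivity (2%:R * (1 - (2%:R : F)^-1 * 2%:R) * (pi Z * W X * W Y + pi X * W Z * W Y + pi Y * W Z * W X)); first ring.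
    by rewrite mulVr // subrr mulr0 mul0r.
Qed.
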